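(* Let $F$ be a field, let $M\geq 2$ be an integer, and let $\omega\in F$ be a primitive $(M-1)$-th root of unity. Let $k_1,\ldots,k_N$ be natural numbers with $\sum_{i=1}^N k_i=M$. Then in the polynomial ring $F[x_1,\ldots,x_N]$, \[ \sum_{j=1}^{M-1}\prod_{i=1}^N(\omega^j+x_i)^{k_i}=(M-1)\prod_{i=1}^N x_i^{k_i}+(M-1)\sum_{i=1}^N k_ix_i+\mathbf{1}_M(2). \]
   Context: The indicator function is $\mathbf{1}_M(x)=1$ if $x=M$ and $\mathbf{1}_M(x)=0$ if $x\neq M$; so $\mathbf{1}_M(2)$ equals $1$ if $M=2$ and $0$ otherwise. *)

(* Defs.v *)
From HB Require Import structures.
From mathcomp Require Import all_boot all_order all_algebra.
From mathcomp Require Import mpoly.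
Set Implicit Arguments. Unset Strict Implicit. Unset Printing Implicit Defensive.

(* Main.v *)
Require Import Defs.
From HB Require Import structures.
From mathcomp Require Import all_boot all_order all_algebra.
From mathcomp Require Import mpoly.
Import GRing.Theory.
Local Open Scope ring_scope.

Section L.
Variable R : comNzRingType.

Lemma listQ (s : seq R) :
  let Q := \prod_(a <- s) ('X + a%:P) in
  [/\ size Q = (size s).+1, Q`_(size s) = 1, Q`_0 = \prod_(a <- s) a,
      Q`_(size s).-1 = \sum_(a <- s) a + (s == [::])%:R
    & forall d, (size s < d)%N -> Q`_d = 0].
Proof.
elim: s => [|a s [IH1 IH2 IH3 IH4 IH5]] /=.
  rewrite !big_nil polyseq1 /= add0r; split => // -[|d] //= _; by rewrite nth_nil.
rewrite !big_cons.
set Q := \prod_(_ <- _) _ in IH1 IH2 IH3 IH4 IH5 *.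
have cf d : (('X + a%:P) * Q)`_d = (if d == 0%N then 0 else Q`_d.-1) + a * Q`_d.
  by rewrite mulrDl coefD coefXM coefCM.
have mQ : Q \is monic by apply/monicP; rewrite /lead_coef IH1.
split.
- rewrite size_monicM ?monicXaddC ?monic_neq0 // size_XaddC IH1 //.
- by rewrite cf /= IH2 IH5 // mulr0 addr0.
- by rewrite cf /= add0r IH3.
- rewrite cf; case Hs: (size s) IH2 IH4 => [|n] IH2 IH4 /=.
    by rewrite IH2 (size0nil Hs) big_nil !addr0 add0r mulr1.
  have Hn : (s == [::]) = false by case: s Hs {Q IH1 IH3 IH5 cf mQ IH2 IH4}.
  rewrite Hn in IH4.
  by rewrite IH4 IH2 mulr1 !addr0 addrC.
- move=> [|d] //= Hd; rewrite cf /= IH5 // IH5 ?mulr0 ?addr0 //.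
  by apply: ltnW.
Qed.
End L.

Lemma geo (F : fieldType) (M : nat) (hM : (2 <= M)%N) (omega : F)
  (homega : (M.-1).-primitive_root omega) (d : nat) :
  \sum_(1 <= j < M) (omega ^+ j) ^+ d = if (M.-1 %| d)%N then (M.-1)%:R else 0.
Proof.
have eM : M = (M.-1).+1 by rewrite prednK // (leq_trans _ hM).
under eq_bigr => j _ do rewrite exprAC.
rewrite (prim_order_dvd homega).
case: eqP => [->|/eqP z1].
  by under eq_bigr => j _ do rewrite expr1n; rewrite sumr_const_nat subn1.
set z := omega ^+ d in z1 *.
have zn : z ^+ M.-1 = 1.
  by rewrite /z -exprM mulnC exprM (prim_expr_order homega) expr1n.
have : (z - 1) * \sum_(1 <= j < M) z ^+ j = 0.
  rewrite mulr_sumr.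
  under eq_bigr => j _ do rewrite mulrBl mul1r -exprS.
  rewrite telescope_sumr; last by apply: leq_trans hM.
  by rewrite {1}eM exprS zn mulr1 expr1 subrr.
by move/eqP; rewrite mulf_eq0 subr_eq0 (negPf z1) => /eqP.
Qed.

Theorem lemma2 (F : fieldType) (M N : nat) (hM : (2 <= M)%N) (omega : F)
  (homega : (M.-1).-primitive_root omega) (k : 'I_N -> nat)
  (hk : (\sum_(i < N) k i)%N = M) :
  \sum_(1 <= j < M) \prod_(i < N) ((omega ^+ j)%:MP + 'X_i) ^+ (k i)
  = (M.-1)%:R * \prod_(i < N) ('X_i : {mpoly F[N]}) ^+ (k i)
    + (M.-1)%:R * \sum_(i < N) (k i)%:R * 'X_i
    + (M == 2%N)%:R.
Proof.
set s : seq {mpoly F[N]} := flatten [seq nseq (k i) 'X_i | i <- index_enum 'I_N].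
have prod_s (G : {mpoly F[N]} -> {mpoly F[N]}) :
    \prod_(a <- s) G a = \prod_(i < N) G 'X_i ^+ k i.
  rewrite big_flatten big_map; apply: eq_bigr => i _; rewrite big_nseq.
  by elim: (k i) => //= m ->; rewrite exprS.
have sum_s : \sum_(a <- s) a = \sum_(i < N) (k i)%:R * 'X_i.
  rewrite big_flatten big_map; apply: eq_bigr => i _; rewrite big_nseq.
  elim: (k i) => [|m /= ->]; first by rewrite mul0r.
  by rewrite -addn1 natrD mulrDl mul1r addrC.
have size_s : size s = M.
  rewrite size_flatten sumnE !big_map -hk; apply: eq_bigr => i _.
  by rewrite size_nseq.
have [H1 H2 H3 H4 H5] := @listQ _ s.
set Q := \prod_(a <- s) _ in H1 H2 H3 H4 H5.
rewrite size_s in H1 H2 H4 H5.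
have eQ j : \prod_(i < N) ((omega ^+ j)%:MP + 'X_i) ^+ (k i)
    = \sum_(d < M.+1) Q`_d * ((omega ^+ j) ^+ d)%:MP.
  have E1 : \prod_(a <- s) ((omega ^+ j)%:MP + a) = Q.[(omega ^+ j)%:MP].
    rewrite /Q horner_prod; apply: eq_bigr => a _.
    by rewrite hornerD hornerX hornerC addrC.
  rewrite prod_s /= in E1.
  apply: (etrans E1).
  by rewrite horner_coef H1; apply: eq_bigr => d _; rewrite -rmorphXn.
under eq_bigr => j _ do rewrite eQ.
rewrite exchange_big /=.
under eq_bigr => d _ do rewrite -mulr_sumr -rmorph_sum geo //.
have c0 : Q`_0 = \prod_(i < N) 'X_i ^+ k i by rewrite H3 (prod_s id).
have sn : (s == [::]) = false by apply/negP => /eqP E; move: size_s; rewrite E => E2; rewrite -E2 in hM.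
have c1 : Q`_M.-1 = \sum_(i < N) (k i)%:R * 'X_i by rewrite H4 sum_s sn addr0.
clear hk eQ size_s.
have [EM|[m EM]] : M = 2%N \/ exists m, M = m.+3.
  case: M hM {homega H1 H2 H4 H5 c1} => [|[|[|m]]] //; first by left.
  by move=> _; right; exists m.
  subst M => /=.
  rewrite !big_ord_recr big_ord0 /= mpolyC1 c0 H2.
  have c1' : Q`_1 = \sum_(i < N) (k i)%:R * 'X_i by exact: c1.
  by rewrite c1' add0r !mulr1 !mul1r.
subst M => /=.
rewrite big_ord_recr /= big_ord_recr /= big_ord_recl /= big1; last first.
  move=> i _; rewrite /bump /= add1n.
  have -> : (m.+2 %| i.+1)%N = false.
    apply/negP => /dvdn_leq => /(_ isT).
    by rewrite ltnS leqNgt (ltn_ord i).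
  by rewrite mpolyC0 mulr0.
have -> : (m.+2 %| m.+3)%N = false.
  rewrite (_ : m.+3 = m.+2 + 1)%N; last by rewrite addn1.
  by rewrite dvdn_addr // dvdn1.
rewrite dvdnn mpolyC_nat mpolyC0 c0 !mulr0 !addr0.
have c1' : Q`_m.+2 = \sum_(i < N) (k i)%:R * 'X_i by exact: c1.
by rewrite c1' mulrC [_ * \sum_(i < N) _]mulrC.
Qed.
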